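(* $\mathrm{GenMem}(\mathrm{RL}) = 2$.
   Context: Let $\Omega=\mathbb{N}\times\{0,1\}$ with partial order $(n,a)\preceq(m,b)$ iff $(n,a)=(m,b)$ or $n<m$. Let $\mathbb{M}$ be the set of all functions $f\colon\Omega\to\Omega$ monotone w.r.t. $\preceq$. The Rope Ladder condition $\mathrm{RL}\subseteq\mathbb{M}^\omega$ (a winning condition over the color set $\mathbb{M}$) consists of all sequences $(f_1,f_2,\ldots)\in\mathbb{M}^\omega$ for which there is $(N,b)\in\Omega$ with $f_n\circ\cdots\circ f_1((0,0))\preceq(N,b)$ for all $n\ge1$. An arena over a color set $C$ is a tuple $\langle V_P, V_A, E\rangle$ of finite sets with $V_P\cap V_A=\varnothing$, $V=V_P\cup V_A\neq\varnothing$, $E\subseteq V\times C\times V$, every node having an outgoing edge. Paths are non-empty finite/infinite sequences of consecutive edges, plus $0$-length paths $\lambda_v$ at each node. A Protagonist's strategy maps each finite path ending in $V_P$ to an outgoing edge of its last node; a path is consistent with $S$ if every edge leaving a Protagonist node along it is the one chosen by $S$ on the preceding prefix. $S$ is winning from $u$ w.r.t. $W\subseteq C^\omega$ if every infinite path consistent with $S$ from $u$ has color sequence in $W$; $S$ is optimal w.r.t. $W$ if there is no node from which some strategy wins w.r.t. $W$ but $S$ does not. A (general) memory structure is $\langle M,m_{init},\delta\rangle$ with $M$ finite, $m_{init}\in M$, $\delta\colon M\times E\to M$ (extended to finite edge sequences by iteration). A strategy $S$ is built on top of it if $S(p_1)=S(p_2)$ whenever $p_1,p_2$ end at the same Protagonist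 node and $\delta(m_{init},p_1)=\delta(m_{init},p_2)$; with $k$ memory states this is a strategy with $k$ states of general memory. $\mathrm{GenMem}(W)$ is the least $k\in\mathbb{Z}^+$ such that every arena over $C$ admits a Protagonist's strategy with $k$ states of general memory that is optimal w.r.t. $W$ ($+\infty$ if none exists). *)

(* Defs.v *)
From mathcomp Require Import all_boot.
Set Implicit Arguments. Unset Strict Implicit. Unset Printing Implicit Defensive.

(* Omega = N x {0,1}; the bit 0 is encoded as false, 1 as true. *)
Definition Omega : Type := (nat * bool)%type.

Definition ole (x y : Omega) : Prop := x = y \/ (x.1 < y.1)%N.

Definition monotoneO (f : Omega -> Omega) : Prop :=
  forall x y, ole x y -> ole (f x) (f y).

Definition MM : Type := {f : Omega -> Omega | monotoneO f}.

(* position after applying the first n colors: pos w n = f_n o ... o f_1 (0,0),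
   where the sequence (f_1, f_2, ...) is w 0, w 1, ... *)
Fixpoint pos (w : nat -> MM) (n : nat) : Omega :=
  match n with
  | 0 => (0%N, false)
  | n'.+1 => proj1_sig (w n') (pos w n')
  end.

Definition RL (w : nat -> MM) : Prop :=
  exists Nb : Omega, forall n, (1 <= n)%N -> ole (pos w n) Nb.

(* An arena over color set C: finite node set V, partitioned by isP into
   Protagonist (isP v = true) and Antagonist nodes; finite edge set, each edge
   e being the triple (src e, col e, tgt e) (the triple map is injective, so
   edges form a subset of V x C x V); every node has an outgoing edge. *)
Record arena (C : Type) := Arena {
  V : finType;
  Ed : finType;
  isP : V -> bool;
  src : Ed -> V;
  col : Ed -> C;
  tgt : Ed -> V;
  arena_inj : forall e1 e2, src e1 = src e2 -> col e1 = col e2 ->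
                tgt e1 = tgt e2 -> e1 = e2;
  arena_nonempty : (0 < #|V|)%N;
  arena_total : forall v : V, exists e : Ed, src e = v
}.

Section Games.
Variables (C : Type) (A : arena C).

(* A finite path is represented as (v, s): start node v and consecutive edges s.
   (v, [::]) is the 0-length path lambda_v. *)
Fixpoint valid (v : V A) (s : seq (Ed A)) : Prop :=
  match s with
  | [::] => True
  | e :: s' => src e = v /\ valid (tgt e) s'
  end.

Definition lastnode (v : V A) (s : seq (Ed A)) : V A := last v (map (@tgt C A) s).

Definition is_strategy (S : V A -> seq (Ed A) -> Ed A) : Prop :=
  forall v s, valid v s -> isP (lastnode v s) -> src (S v s) = lastnode v s.

Definition inf_path_from (u : V A) (p : nat -> Ed A) : Prop :=
  src (p 0%N) = u /\ forall n, tgt (p n) = src (p n.+1).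

Definition consistent (S : V A -> seq (Ed A) -> Ed A) (u : V A) (p : nat -> Ed A) : Prop :=
  forall n, isP (src (p n)) -> p n = S u (mkseq p n).

Definition winning_from (W : (nat -> C) -> Prop) (S : V A -> seq (Ed A) -> Ed A)
  (u : V A) : Prop :=
  forall p, inf_path_from u p -> consistent S u p -> W (fun n => col (p n)).

Definition optimal (W : (nat -> C) -> Prop) (S : V A -> seq (Ed A) -> Ed A) : Prop :=
  forall u, (exists S', is_strategy S' /\ winning_from W S' u) -> winning_from W S u.

(* S is built on top of some memory structure with exactly k states
   (memory states are 'I_k, delta extended to sequences by iteration). *)
Definition built_on_mem (k : nat) (S : V A -> seq (Ed A) -> Ed A) : Prop :=
  exists (minit : 'I_k) (delta : 'I_k -> Ed A -> 'I_k),
    forall v1 s1 v2 s2, valid v1 s1 -> valid v2 s2 ->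
      lastnode v1 s1 = lastnode v2 s2 -> isP (lastnode v1 s1) ->
      foldl delta minit s1 = foldl delta minit s2 ->
      S v1 s1 = S v2 s2.

End Games.

Definition admits_mem (C : Type) (W : (nat -> C) -> Prop) (k : nat) : Prop :=
  forall A : arena C, exists S : V A -> seq (Ed A) -> Ed A,
    is_strategy S /\ built_on_mem k S /\ optimal W S.

Definition GenMem_eq (C : Type) (W : (nat -> C) -> Prop) (n : nat) : Prop :=
  (0 < n)%N /\ admits_mem W n /\ forall j, (0 < j)%N -> (j < n)%N -> ~ admits_mem W j.

(* Main.v *)
From Stdlib Require Import ClassicalEpsilon.
Require Import Defs.
From mathcomp Require Import all_boot.
From mathcomp Require Import zify.
Set Implicit Arguments. Unset Strict Implicit. Unset Printing Implicit Defensive.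

Lemma ole_trans x y z : ole x y -> ole y z -> ole x z.
Proof.
case=> [->|h1] //; case=> [<-|h2]; [by right| right; exact: ltn_trans h1 h2].
Qed.

Lemma ole_refl x : ole x x. Proof. by left. Qed.

Lemma max_exists (Q : nat -> Prop) N : (forall k, Q k -> k < N) -> (exists k, Q k) ->
  exists m, Q m /\ forall k, Q k -> k <= m.
Proof.
elim: N => [|N IH] hb hex.
  by case: hex => k /hb.
case: (classic (Q N)) => hQ.
  by exists N; split => // k /hb.
apply: IH => // k hk; have := hb k hk; rewrite ltnS leq_eqVlt => /orP[/eqP e|//].
by subst.
Qed.

Section Main.
Variable A : arena MM.
Local Notation VV := (V A).
Local Notation EE := (Ed A).

Definition fe (e : EE) : Omega -> Omega := proj1_sig (col e).
Lemma fe_mono e : monotoneO (fe e). Proof. exact: proj2_sig (col e). Qed.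

Definition posl (s : seq EE) : Omega := foldl (fun x e => fe e x) (0, false) s.

Lemma posl_rcons s e : posl (rcons s e) = fe e (posl s).
Proof. by rewrite /posl foldl_rcons. Qed.

Lemma lastnode_rcons (u : VV) s e : lastnode u (rcons s e) = tgt e.
Proof. by rewrite /lastnode map_rcons last_rcons. Qed.

Lemma valid_rcons (u : VV) s e : valid u (rcons s e) <-> valid u s /\ src e = lastnode u s.
Proof.
elim: s u => [|a s IH] u /=; first by split; [case|move=> [_ ->]].
rewrite IH /lastnode /=; split; [by case=> -> []|by case=> [[-> ?] ?]].
Qed.

Lemma pos_posl (p : nat -> EE) n : pos (fun k => col (p k)) n = posl (mkseq p n).
Proof. elim: n => [//|n IH] /=; by rewrite mkseqS posl_rcons -IH. Qed.

Definition closedfam N (Y : VV -> Omega -> Prop) :=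
  forall v x, Y v x -> x.1 < N /\
    (isP v -> exists e, src e = v /\ Y (tgt e) (fe e x)) /\
    (~~ isP v -> forall e, src e = v -> Y (tgt e) (fe e x)).

Definition Good (v : VV) (x : Omega) := exists N Y, closedfam N Y /\ Y v x.

Lemma closed_mono N N' Y : closedfam N Y -> N <= N' -> closedfam N' Y.
Proof.
move=> h le v x /h [h1 h2]; split => //; exact: leq_trans h1 le.
Qed.

Lemma closed_ext N Y Z : closedfam N Z ->
  (forall v x, Y v x -> x.1 < N /\
    (isP v -> exists e, src e = v /\ (Y (tgt e) (fe e x) \/ Z (tgt e) (fe e x))) /\
    (~~ isP v -> forall e, src e = v -> (Y (tgt e) (fe e x) \/ Z (tgt e) (fe e x)))) ->
  closedfam N (fun v x => Y v x \/ Z v x).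
Proof.
move=> hZ hY v x [/hY|/hZ] [h1 [h2 h3]]; split=> //; split.
- by move=> /h2 [e [? ?]]; exists e; split => //; right.
- by move=> hn e /(h3 hn); right.
Qed.

Lemma closed_union (I : finType) (Nf : I -> nat) (Z : I -> VV -> Omega -> Prop) :
  (forall i, closedfam (Nf i) (Z i)) ->
  closedfam (\max_i Nf i) (fun v x => exists i, Z i v x).
Proof.
move=> h v x [i /h [h1 [h2 h3]]]; split; first exact: leq_trans h1 (leq_bigmax i).
split; first by move=> /h2 [e [? ?]]; exists e; split => //; exists i.
by move=> hn e /(h3 hn) ?; exists i.
Qed.

Lemma good_fin (I : finType) (P : I -> Prop) (g : I -> VV) (h : I -> Omega) :
  (forall i, P i -> Good (g i) (h i)) ->
  exists N Y, closedfam N Y /\ forall i, P i -> Y (g i) (h i).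
Proof.
move=> H.
have H' : forall i, exists NY : nat * (VV -> Omega -> Prop),
    closedfam NY.1 NY.2 /\ (P i -> NY.2 (g i) (h i)).
  move=> i; case: (classic (P i)) => hP.
    by case: (H i hP) => N [Y [? ?]]; exists (N, Y).
  exists (0, fun _ _ => False); split => //.
pose F := fun i => proj1_sig (constructive_indefinite_description _ (H' i)).
have HF : forall i, closedfam (F i).1 (F i).2 /\ (P i -> (F i).2 (g i) (h i)).
  by move=> i; rewrite /F; case: constructive_indefinite_description.
exists (\max_i (F i).1), (fun v x => exists i, (F i).2 v x); split.
  by apply: closed_union => i; case: (HF i).
by move=> i hi; exists i; case: (HF i) => _; apply.
Qed.

Lemma good_P (v : VV) x e : isP v -> src e = v -> Good (tgt e) (fe e x) -> Good v x.
Proof.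
move=> hP hs [N [Y [hY hy]]].
exists (maxn N x.1.+1), (fun w y => (w = v /\ y = x) \/ Y w y); split; last by left.
apply: closed_ext; first by apply: closed_mono hY (leq_maxl _ _).
move=> w y [-> ->]; split; first by rewrite leq_max ltnSn orbT.
split; first by move=> _; exists e; split => //; right.
by rewrite hP.
Qed.

Lemma good_A (v : VV) x : ~~ isP v -> (forall e, src e = v -> Good (tgt e) (fe e x)) -> Good v x.
Proof.
move=> hA H.
have [N [Y [hY hy]]] := @good_fin _ (fun e => src e = v) (fun e => tgt e) (fun e => fe e x) H.
exists (maxn N x.1.+1), (fun w y => (w = v /\ y = x) \/ Y w y); split; last by left.
apply: closed_ext; first by apply: closed_mono hY (leq_maxl _ _).
move=> w y [-> ->]; split; first by rewrite leq_max ltnSn orbT.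
split; first by rewrite (negbTE hA).
by move=> _ e he; right; apply: hy.
Qed.

Definition cons_pref (S : VV -> seq EE -> EE) (u : VV) (h : seq EE) :=
  valid u h /\ forall h1 e h2, h = h1 ++ e :: h2 -> isP (src e) -> e = S u h1.

Lemma cons_nil S u : cons_pref S u [::].
Proof. by split => // -[]. Qed.

Lemma cons_rcons S u h e : cons_pref S u h -> src e = lastnode u h ->
  (isP (src e) -> e = S u h) -> cons_pref S u (rcons h e).
Proof.
move=> [hv hc] hs he; split; first by apply/valid_rcons.
move=> h1 e' h2; case/lastP: h2 => [|t z].
  by rewrite cats1 => /rcons_inj [eh ee]; subst.
rewrite -rcons_cons -rcons_cat => /rcons_inj [eh ee]; subst; exact: hc.
Qed.

Lemma ext_lemma S u (HS : is_strategy S) h : cons_pref S u h ->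
  ~ Good (lastnode u h) (posl h) ->
  exists h', cons_pref S u (h ++ h') /\ ~ Good (lastnode u (h ++ h')) (posl (h ++ h'))
     /\ (posl h).1 < (posl (h ++ h')).1.
Proof.
move=> hc hng; apply: NNPP => hno.
pose N := (posl h).1.+1.
have hb : forall h', cons_pref S u (h ++ h') -> ~ Good (lastnode u (h ++ h')) (posl (h ++ h')) ->
    (posl (h ++ h')).1 < N.
  move=> h' h1 h2; rewrite ltnS leqNgt; apply/negP => h3; apply: hno; by exists h'.
pose Y1 w y := exists h', cons_pref S u (h ++ h') /\ lastnode u (h ++ h') = w /\
   posl (h ++ h') = y /\ ~ Good w y.
have [M [Z [hZ hZi]]] := @good_fin (EE * 'I_N * bool)%type
   (fun i => Good (tgt i.1.1) (fe i.1.1 (nat_of_ord i.1.2, i.2)))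
   (fun i => tgt i.1.1) (fun i => fe i.1.1 (nat_of_ord i.1.2, i.2)) (fun i hi => hi).
apply: (hng); exists (maxn N M), (fun w y => Y1 w y \/ Z w y); split; last first.
  by left; rewrite /Y1; exists [::]; rewrite cats0.
apply: closed_ext; first exact: closed_mono hZ (leq_maxr _ _).
move=> w y [h' [hc' [hl [hp hg]]]]; subst w y.
split; first exact: leq_trans (hb h' hc' hg) (leq_maxl _ _).
split.
- move=> hP; pose e := S u (h ++ h').
  have hs : src e = lastnode u (h ++ h') := HS _ _ (proj1 hc') hP.
  exists e; split => //; left; exists (rcons h' e); rewrite -rcons_cat.
  split; first by apply: cons_rcons.
  rewrite lastnode_rcons posl_rcons; split => //; split => // g.
  by apply: hg; apply: good_P hP hs g.
- move=> hA e hs.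
  case: (classic (Good (tgt e) (fe e (posl (h ++ h'))))) => hge.
    right; have := hZi ((e, Ordinal (hb h' hc' hg)), (posl (h ++ h')).2).
    by rewrite /= -surjective_pairing; apply.
  left; exists (rcons h' e); rewrite -rcons_cat.
  split; first by apply: cons_rcons => // hP; rewrite hs in hP; rewrite hP in hA.
  by rewrite lastnode_rcons posl_rcons.
Qed.

Lemma valid_nth0 (u : VV) s e0 : valid u s -> 0 < size s -> src (nth e0 s 0) = u.
Proof. by case: s => [|a s] //= [-> _]. Qed.

Lemma valid_nthS (u : VV) s e0 i : valid u s -> i.+1 < size s ->
  tgt (nth e0 s i) = src (nth e0 s i.+1).
Proof.
elim: s u i => [|a s IH] u i //= [_ hv].
case: i => [|i] /=; first by case: s hv {IH} => [|b s] //= [-> _].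
by move=> hi; apply: IH hv hi.
Qed.

Lemma no_good_lose S u (e0 : EE) : is_strategy S -> ~ Good u (0, false) ->
  ~ winning_from RL S u.
Proof.
move=> HS hng hw.
pose T := {h : seq EE | cons_pref S u h /\ ~ Good (lastnode u h) (posl h)}.
have hext : forall t : T, exists t' : T, exists h', sval t' = sval t ++ h' /\
    (posl (sval t)).1 < (posl (sval t')).1.
  case=> h [hc hg]; have [h' [hc' [hg' hl]]] := ext_lemma HS hc hg.
  by exists (exist _ (h ++ h') (conj hc' hg')), h'.
pose ext t := proj1_sig (constructive_indefinite_description _ (hext t)).
have hextP t : exists h', sval (ext t) = sval t ++ h' /\
    (posl (sval t)).1 < (posl (sval (ext t))).1.
  by rewrite /ext; case: constructive_indefinite_description.
pose t0 : T := exist _ [::] (conj (cons_nil S u) hng).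
pose H k := sval (iter k ext t0).
have HS1 k : exists h', H k.+1 = H k ++ h' /\ (posl (H k)).1 < (posl (H k.+1)).1.
  exact: hextP.
have F1 k : k <= (posl (H k)).1.
  elim: k => [//|k IH]; have [_ [_ hl]] := HS1 k; exact: leq_ltn_trans IH hl.
have F3 k : k <= size (H k).
  elim: k => [//|k IH]; have [h' [he hl]] := HS1 k.
  case: h' he => [|a h'] he; first by rewrite he cats0 ltnn in hl.
  by rewrite he size_cat /= addnS ltnS (leq_trans IH) // leq_addr.
have F2 j k : j <= k -> exists t, H k = H j ++ t.
  elim: k => [|k IH]; first by rewrite leqn0 => /eqP ->; exists [::]; rewrite cats0.
  rewrite leq_eqVlt => /orP [/eqP ->|]; first by exists [::]; rewrite cats0.
  rewrite ltnS => /IH [t ht]; have [h' [he _]] := HS1 k.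
  by exists (t ++ h'); rewrite he ht catA.
have F4 k : cons_pref S u (H k) by rewrite /H; case: (iter k ext t0) => h [].
pose p n := nth e0 (H n.+1) n.
have F5 m i : i < size (H m) -> nth e0 (H m) i = p i.
  move=> hi; rewrite /p; case: (leqP m i.+1) => hm.
    by have [t ->] := F2 _ _ hm; rewrite nth_cat hi.
  have [t ->] := F2 _ _ (ltnW hm); rewrite nth_cat.
  by rewrite (leq_trans (leqnn i.+1) (F3 i.+1)).
have F6 n m : n <= size (H m) -> mkseq p n = take n (H m).
  move=> hn; apply: (@eq_from_nth _ e0).
    by rewrite size_mkseq size_take; case: ltngtP hn => // ->.
  move=> i; rewrite size_mkseq => hi; rewrite nth_mkseq // nth_take //.
  by rewrite F5 // (leq_trans hi hn).
have hpath : inf_path_from u p.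
  split.
    rewrite /p; apply: valid_nth0; first by case: (F4 1).
    exact: leq_trans (F3 1).
  move=> n; have hs := F3 n.+2.
  rewrite -(F5 n.+2 n) ?(leq_trans _ hs) // -(F5 n.+2 n.+1) //.
  by case: (F4 n.+2) => hv _; exact: valid_nthS hv hs.
have hcons : consistent S u p.
  move=> n hP; have [_ hc] := F4 n.+1.
  have hs : n < size (H n.+1) := F3 n.+1.
  rewrite (F6 n n.+1 (ltnW hs)); apply: hc hP.
  by rewrite -{1}(cat_take_drop n (H n.+1)) (drop_nth e0 hs).
have [Nb hNb] := hw p hpath hcons.
pose k := Nb.1.+1.
have hk : k <= size (H k) := F3 k.
have := hNb (size (H k)) (leq_trans (ltn0Sn _) hk).
rewrite pos_posl (F6 _ k (leqnn _)) take_size.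
have := F1 k; rewrite /k => hl [he|hlt].
  by rewrite he ltnn in hl.
by have := ltn_trans hl hlt; rewrite ltnn.
Qed.

Lemma pts N Y (hY : closedfam N Y) (w : VV) : exists pp : Omega * Omega,
  (forall y, Y w y -> Y w pp.1 /\ Y w pp.2) /\
  (forall y, Y w y -> ole y pp.1 \/ ole y pp.2) /\
  (Y w (0, false) -> ole (0, false) pp.1).
Proof.
case: (classic (exists y, Y w y)) => [[[k0 b0] hy0]|hno]; last first.
  exists ((0, false), (0, false)); split; first by move=> y hy; case: hno; exists y.
  by split; move=> *; case: hno; eexists; eauto.
have hb : forall k, (exists b, Y w (k, b)) -> k < N.
  by move=> k [b /hY [h _]].
have [n [[b hnb] hmax]] := @max_exists (fun k => exists b, Y w (k, b)) N hb
   (ex_intro _ k0 (ex_intro _ b0 hy0)).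
case: (classic (Y w (n, false))) => hf.
  case: (classic (Y w (n, true))) => ht.
    exists ((n, false), (n, true)); split => //; split.
      move=> [k c] hy; have := hmax k (ex_intro _ c hy); rewrite leq_eqVlt => /orP [/eqP ->|hlt].
        by case: c hy => _; [right|left]; left.
      by left; right.
    by case: n {hnb hmax hb ht hf} => [|n] _; [left|right].
  exists ((n, false), (n, false)); split => //; split.
    move=> [k c] hy; have := hmax k (ex_intro _ c hy); rewrite leq_eqVlt => /orP [/eqP e|hlt].
      by subst k; case: c hy => hy; [case: ht|left; left].
    by left; right.
  by case: n {hnb hmax hb ht hf} => [|n] _; [left|right].
have hbt : b = true by case: b hnb => // /hf.
subst b.
exists ((n, true), (n, true)); split => //; split.
  move=> [k c] hy; have := hmax k (ex_intro _ c hy); rewrite leq_eqVlt => /orP [/eqP e|hlt].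
    by subst k; case: c hy => hy; [left; left|case: hf].
  by left; right.
case: n {hnb hmax hb} hf => [|n] hf h0; first by case: hf.
by right.
Qed.

Lemma lastnode_mk (u : VV) (p : nat -> EE) n : inf_path_from u p ->
  lastnode u (mkseq p n) = src (p n).
Proof.
case=> h0 hs; case: n => [|n]; first by rewrite h0.
by rewrite mkseqS lastnode_rcons hs.
Qed.

Lemma mem2_strategy N Y : closedfam N Y -> exists S, is_strategy S /\
  built_on_mem 2 S /\ forall u, Y u (0, false) -> winning_from RL S u.
Proof.
move=> hY.
pose PP w := sval (constructive_indefinite_description _ (pts hY w)).
have hPP w : (forall y, Y w y -> Y w (PP w).1 /\ Y w (PP w).2) /\
  (forall y, Y w y -> ole y (PP w).1 \/ ole y (PP w).2) /\
  (Y w (0, false) -> ole (0, false) (PP w).1).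
  by rewrite /PP; case: constructive_indefinite_description.
pose Pt w (m : 'I_2) := if nat_of_ord m == 0 then (PP w).1 else (PP w).2.
have Pt_in w m y : Y w y -> Y w (Pt w m).
  move=> hy; have [h1 _] := hPP w; have [ha hb] := h1 y hy.
  by rewrite /Pt; case: (_ == 0).
have hsig : forall w m, exists e : EE, src e = w /\
    (isP w -> (exists y, Y w y) -> Y (tgt e) (fe e (Pt w m))).
  move=> w m; case: (classic (isP w /\ exists y, Y w y)) => [[hP [y hy]]|hn].
    have [_ [h2 _]] := hY _ _ (Pt_in w m y hy); have [e [he1 he2]] := h2 hP.
    by exists e; split.
  have [e he] := arena_total w; exists e; split => // hP hy; case: hn; by split.
pose sig w m := sval (constructive_indefinite_description _ (hsig w m)).
have hsigP w m : src (sig w m) = w /\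
    (isP w -> (exists y, Y w y) -> Y (tgt (sig w m)) (fe (sig w m) (Pt w m))).
  by rewrite /sig; case: constructive_indefinite_description.
pose delta (m : 'I_2) (e : EE) : 'I_2 :=
  if excluded_middle_informative (ole (fe e (Pt (src e) m)) (Pt (tgt e) ord0))
  then ord0 else ord_max.
pose S v s := sig (lastnode v s) (foldl delta ord0 s).
exists S; split.
  by move=> v s _ _; rewrite /S; case: (hsigP (lastnode v s) (foldl delta ord0 s)).
split.
  by exists ord0, delta => v1 s1 v2 s2 _ _ hl _ hm; rewrite /S hl hm.
move=> u hu p hp hc.
have inv : forall n, (exists y, Y (src (p n)) y) /\
    ole (posl (mkseq p n)) (Pt (src (p n)) (foldl delta ord0 (mkseq p n))).
  elim=> [|n [[y hy] hole]].
    have [_ [_ h3]] := hPP u; case: hp => h0 _; rewrite h0 /=.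
    by split; [exists (0, false)|apply: h3].
  set w := src (p n) in hy hole; set m := foldl delta ord0 (mkseq p n) in hole.
  have hq := Pt_in w m y hy.
  have hYe : Y (tgt (p n)) (fe (p n) (Pt w m)).
    case hPw: (isP w).
      have hpn : p n = sig w m.
        by rewrite (hc n hPw) /S (lastnode_mk n hp).
      by rewrite hpn; apply: (proj2 (hsigP w m)) => //; exists y.
    by have [_ [_ h3]] := hY _ _ hq; apply: h3 => //; rewrite hPw.
  case: hp => h0 hs; rewrite hs in hYe.
  split; first by exists (fe (p n) (Pt w m)).
  rewrite mkseqS posl_rcons foldl_rcons -/m.
  apply: ole_trans (@fe_mono (p n) _ _ hole) _.
  rewrite /delta hs.
  case: excluded_middle_informative => // hn.
  by have [_ [h2 _]] := hPP (src (p n.+1)); case: (h2 _ hYe).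
rewrite /RL; exists (N, false) => n _; rewrite pos_posl.
have [[y hy] hole] := inv n.
have [hlt _] := hY _ _ (Pt_in _ (foldl delta ord0 (mkseq p n)) _ hy).
by right; case: hole => [->|h] //; apply: ltn_trans h hlt.
Qed.

End Main.

Lemma admits2 : admits_mem RL 2.
Proof.
move=> A.
have [N [Y [hY hYi]]] := @good_fin A (V A) (fun u => Good u (0, false)) id
   (fun _ => (0, false)) (fun i hi => hi).
have [S [h1 [h2 h3]]] := mem2_strategy hY.
exists S; split => //; split => //.
move=> u [S' [hS' hw]]; apply: h3; apply: hYi; apply: NNPP => hng.
have [e0 _] := arena_total u.
exact: (no_good_lose e0 hS' hng hw).
Qed.

Definition fF (x : Omega) : Omega := if x.2 then (x.1.+1, true) else (x.1, true).
Definition fG (x : Omega) : Omega := if x.2 then (x.1, false) else (x.1.+1, false).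

Lemma fF_mono : monotoneO fF.
Proof.
move=> [n a] [m b] [e|/= h]; first by left; rewrite e.
rewrite /fF /=; case: a; case: b => /=.
- by right.
- move: h; rewrite leq_eqVlt => /orP [/eqP <-|h]; [by left|by right].
- by right; apply: ltn_trans h _.
- by right.
Qed.

Lemma fG_mono : monotoneO fG.
Proof.
move=> [n a] [m b] [e|/= h]; first by left; rewrite e.
rewrite /fG /=; case: a; case: b => /=.
- by right.
- by right; apply: ltn_trans h _.
- move: h; rewrite leq_eqVlt => /orP [/eqP <-|h]; [by left|by right].
- by right.
Qed.

Definition colFG (b : bool) : MM :=
  if b then exist _ fG fG_mono else exist _ fF fF_mono.

Definition arFG : arena MM.
refine (@Arena MM unit bool (fun _ => true) (fun _ => tt) colFG (fun _ => tt) _ _ _).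
- move=> [] [] _ hc _ //; have := f_equal (fun f : MM => proj1_sig f (0, false)) hc;
  by rewrite /= /fG /fF.
- by rewrite card_unit.
- by move=> v; exists true; case: v.
Defined.

Lemma not_admits1 : ~ admits_mem RL 1.
Proof.
move=> h; have [S [hS [[minit [delta hm]] hopt]]] := h arFG.
have hvalid : forall (v : V arFG) s, valid v s.
  move=> v s; elim: s v => [|e s IH] v //=; split; [by case: v| exact: IH].
pose S' := fun (v : V arFG) (s : seq (Ed arFG)) => (odd (size s) : Ed arFG).
have hS' : is_strategy S' by move=> v s _ _; case: (lastnode v s); case: (src _).
have hw' : winning_from RL S' tt.
  move=> p _ hc.
  have hp : forall n, p n = odd n.
    by move=> n; rewrite (hc n isT) /S' size_mkseq.
  exists (1, false) => n _; right.
  suff -> : pos (fun n => col (p n)) n = (0, odd n) by [].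
  elim: n => [//|n IH] /=; rewrite IH hp.
  by case: (odd n).
have hwS := hopt tt (ex_intro _ S' (conj hS' hw')).
pose e := S tt [::].
pose p := fun _ : nat => e.
have hpath : inf_path_from (tt : V arFG) p by split => //.
have hcons : consistent S (tt : V arFG) p.
  move=> n _; rewrite /p /e; apply: hm => //; first by move: (lastnode _ _) (lastnode _ _) => [] [].
  by rewrite (ord1 (foldl _ _ _)) (ord1 (foldl _ _ _)).
have [Nb hNb] := hwS p hpath hcons.
have hpos0 : forall (b : Ed arFG) n, (pos (fun _ => col b) n.+1).1 >= n.
  case=> n.
    have -> : pos (fun _ => col (true : Ed arFG)) n.+1 = (n.+1, false).
      by elim: n => [//|n IH] /=; move: IH => /= ->.
    by [].
  have -> : pos (fun _ => col (false : Ed arFG)) n.+1 = (n, true).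
    by elim: n => [//|n IH] /=; move: IH => /= ->.
  by [].
have := hNb Nb.1.+2 isT; have := hpos0 e Nb.1.+1.
move=> hl [he|hlt].
  by rewrite he in hl; lia.
by have := leq_ltn_trans hl hlt; lia.
Qed.

Theorem proposition1 : GenMem_eq RL 2.
Proof.
split => //; split; first exact: admits2.
by move=> [|[|j]] // _ _; exact: not_admits1.
Qed.
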